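(* Let $A\in\{0,1\}^{n\times n}$ and let $(n_1,n_2)$ be positive integers with $n_1n_2=n$. For each $(i,j)$ with $a_{ij}=1$, write $i-1=\tilde i_1 n_2+\tilde i_2$ and $j-1=\tilde j_1 n_2+\tilde j_2$ with $0\le \tilde i_1,\tilde j_1<n_1$, $0\le \tilde i_2,\tilde j_2<n_2$ (Euclidean division), set $i_k=\tilde i_k+1$, $j_k=\tilde j_k+1$, and define the linear indices $l_1=(j_1-1)n_1+i_1$ and $l_2=(j_2-1)n_2+i_2$. Let $S\subset\mathbb{N}\times\mathbb{N}$ be the set of all pairs $(l_1,l_2)$ so obtained as $(i,j)$ ranges over the positions of the nonzero entries of $A$. Then $A=A_1\otimes A_2$ for some $A_1\in\{0,1\}^{n_1\times n_1}$, $A_2\in\{0,1\}^{n_2\times n_2}$ if and only if there exist subsets $S_1,S_2\subset\mathbb{N}$ such that $S=S_1\times S_2$.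
   Context: Kronecker products of binary matrices use Boolean arithmetic ($1+1=1$, products as usual). *)

(* Defs.v *)
From mathcomp Require Import all_boot all_algebra.
Set Implicit Arguments. Unset Strict Implicit. Unset Printing Implicit Defensive.

(* Kronecker product of binary matrices with Boolean arithmetic (0-based
   indices): (A1 (x) A2)[i1*n2 + i2, j1*n2 + j2] = A1[i1,j1] * A2[i2,j2],
   the Boolean product being conjunction. *)
Definition kronb (n1 n2 n : nat) (A1 : 'M[bool]_n1) (A2 : 'M[bool]_n2)
  : 'M[bool]_n :=
  \matrix_(i, j) [exists i1 : 'I_n1, exists i2 : 'I_n2,
                  exists j1 : 'I_n1, exists j2 : 'I_n2,
      [&& (i : nat) == i1 * n2 + i2, (j : nat) == j1 * n2 + j2,
          A1 i1 j1 & A2 i2 j2]].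

(* The set S of pairs (l1, l2) built from the nonzero entries (i, j) of A,
   with the paper's 1-based conventions: for 0-based ordinal i (= paper i - 1),
   ~i1 = i %/ n2, ~i2 = i %% n2, i_k = ~i_k + 1, and
   l1 = (j1 - 1) n1 + i1 = ~j1 * n1 + ~i1 + 1,
   l2 = (j2 - 1) n2 + i2 = ~j2 * n2 + ~i2 + 1. *)
Definition Sset (n n1 n2 : nat) (A : 'M[bool]_n) (p : nat * nat) : Prop :=
  exists (i j : 'I_n), A i j /\
    p = ((j %/ n2) * n1 + (i %/ n2) + 1, (j %% n2) * n2 + (i %% n2) + 1)%N.

(* Main.v *)
Require Import Defs.
From mathcomp Require Import all_boot all_algebra.
From mathcomp Require Import zify.

Lemma dm_div m a (b : nat) : (a < m)%N -> ((b * m + a) %/ m)%N = b.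
Proof. move=> h; rewrite divnMDl ?divn_small ?addn0 //; lia. Qed.

Lemma dm_mod m a (b : nat) : (a < m)%N -> ((b * m + a) %% m)%N = a.
Proof. move=> h; rewrite modnMDl modn_small //. Qed.

Lemma enc_inj m a b c d : (a < m)%N -> (c < m)%N ->
  (b * m + a + 1 = d * m + c + 1)%N -> a = c /\ b = d.
Proof.
move=> ha hc e; have e' : (b * m + a = d * m + c)%N by lia.
split.
- by rewrite -(@dm_mod m a b ha) e' dm_mod.
- by rewrite -(@dm_div m a b ha) e' dm_div.
Qed.

Arguments enc_inj {m a b c d}.

Lemma bnd n1 n2 a b : (a < n1)%N -> (b < n2)%N -> (a * n2 + b < n1 * n2)%N.
Proof. move=> ha hb; nia. Qed.

Theorem lemma4 (n n1 n2 : nat) (A : 'M[bool]_n) :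
  (0 < n1)%N -> (0 < n2)%N -> (n1 * n2)%N = n ->
  (exists (A1 : 'M[bool]_n1) (A2 : 'M[bool]_n2), A = kronb n A1 A2) <->
  (exists S1 S2 : nat -> Prop,
      forall l1 l2 : nat, Sset n1 n2 A (l1, l2) <-> (S1 l1 /\ S2 l2)).
Proof.
move=> h1 h2 hn.
have hdiv : forall i : 'I_n, (i %/ n2 < n1)%N.
  by move=> i; rewrite ltn_divLR // hn.
have hmod : forall i : 'I_n, (i %% n2 < n2)%N by move=> i; rewrite ltn_pmod.
split.
- move=> [A1 [A2 ->]].
  exists (fun l => exists (i1 j1 : 'I_n1), A1 i1 j1 /\ l = (j1 * n1 + i1 + 1)%N).
  exists (fun l => exists (i2 j2 : 'I_n2), A2 i2 j2 /\ l = (j2 * n2 + i2 + 1)%N).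
  move=> l1 l2; split.
  + move=> [i [j [hA [-> ->]]]].
    move: hA; rewrite mxE => /existsP[i1 /existsP[i2 /existsP[j1 /existsP[j2]]]].
    move=> /and4P[/eqP ei /eqP ej a1 a2].
    rewrite ei ej !dm_div ?ltn_ord // !dm_mod ?ltn_ord //.
    by split; [exists i1, j1 | exists i2, j2].
  + move=> [[i1 [j1 [a1 ->]]] [i2 [j2 [a2 ->]]]].
    have hi : (i1 * n2 + i2 < n)%N by rewrite -hn bnd.
    have hj : (j1 * n2 + j2 < n)%N by rewrite -hn bnd.
    exists (Ordinal hi), (Ordinal hj); split.
    * rewrite mxE; apply/existsP; exists i1; apply/existsP; exists i2.
      apply/existsP; exists j1; apply/existsP; exists j2.
      by rewrite /= !eqxx a1 a2.
    * by rewrite /= !dm_div ?ltn_ord // !dm_mod ?ltn_ord.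
- move=> [S1 [S2 hS]].
  exists (\matrix_(i1, j1) [exists i : 'I_n, exists j : 'I_n,
            [&& A i j, (i %/ n2 == (i1 : nat))%N & (j %/ n2 == (j1 : nat))%N]])%R.
  exists (\matrix_(i2, j2) [exists i : 'I_n, exists j : 'I_n,
            [&& A i j, (i %% n2 == (i2 : nat))%N & (j %% n2 == (j2 : nat))%N]])%R.
  apply/matrixP => i j; rewrite mxE; apply/idP/idP.
  + move=> hA.
    apply/existsP; exists (Ordinal (hdiv i)); apply/existsP; exists (Ordinal (hmod i)).
    apply/existsP; exists (Ordinal (hdiv j)); apply/existsP; exists (Ordinal (hmod j)).
    rewrite /= -!divn_eq !eqxx /= !mxE.
    apply/andP; split; apply/existsP; exists i; apply/existsP; exists j;
      by rewrite hA !eqxx.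
  + move=> /existsP[i1 /existsP[i2 /existsP[j1 /existsP[j2]]]].
    move=> /and4P[/eqP ei /eqP ej].
    rewrite !mxE => /existsP[a /existsP[b /and3P[ab /eqP ea /eqP eb]]].
    move=> /existsP[c /existsP[d /and3P[cd /eqP ec /eqP ed]]].
    have s1 : S1 ((b %/ n2) * n1 + (a %/ n2) + 1)%N.
      by case: (proj1 (hS ((b %/ n2) * n1 + (a %/ n2) + 1)%N ((b %% n2) * n2 + (a %% n2) + 1)%N)) => //; exists a, b.
    have s2 : S2 ((d %% n2) * n2 + (c %% n2) + 1)%N.
      by case: (proj1 (hS ((d %/ n2) * n1 + (c %/ n2) + 1)%N ((d %% n2) * n2 + (c %% n2) + 1)%N)) => //; exists c, d.
    have [e [f [ef]]] := proj2 (hS _ _) (conj s1 s2).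
    case=> E1 E2.
    have [g1 g2] := enc_inj (hdiv a) (hdiv e) E1.
    have [g3 g4] := enc_inj (hmod c) (hmod e) E2.
    have -> : i = e.
      by apply/val_inj; rewrite /= ei (divn_eq e n2) -g1 -g3 ea ec.
    have -> : j = f.
      by apply/val_inj; rewrite /= ej (divn_eq f n2) -g2 -g4 eb ed.
    exact: ef.
Qed.
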